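(* Let $A$ be a distributive meet-complemented lattice in which $\Box x$ and $\Diamond x$ exist for every $x\in A$ and such that $\Box a\le\Box\Box a$ for all $a\in A$. Then for all $a,b\in A$: (i) $\Box(a\wedge\Diamond b)=\Box a\wedge\Diamond b$; (ii) $\Diamond(a\vee\Box b)=\Diamond a\vee\Box b$; (iii) $\Box(a\vee\Box b)=\Box a\vee\Box b$; (iv) $\Diamond(a\wedge\Diamond b)=\Diamond a\wedge\Diamond b$.
   Context: A meet-complemented lattice is a lattice $(L,\le)$ such that for every $a\in L$ the element $\neg a=\max\{b\in L: a\wedge b\le c\ \text{for all } c\in L\}$ exists; it is bounded with bottom $0$ and top $1$. For $a\in L$, $\Box a=\max\{b\in L: a\vee\neg b=1\}$ and $\Diamond a=\min\{b\in L: \neg a\vee b=1\}$. *)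

(* Defs.v *)
From HB Require Import structures.
From mathcomp Require Import all_boot all_order.
Set Implicit Arguments. Unset Strict Implicit. Unset Printing Implicit Defensive.
Import Order.TTheory.
Local Open Scope order_scope.

Definition is_max (d : Order.disp_t) (L : porderType d) (P : L -> Prop) (m : L) :=
  P m /\ forall b, P b -> b <= m.

Definition is_min (d : Order.disp_t) (L : porderType d) (P : L -> Prop) (m : L) :=
  P m /\ forall b, P b -> m <= b.

Definition is_meet_compl (d : Order.disp_t) (L : tbLatticeType d) (neg : L -> L) :=
  forall a : L, is_max (fun b => forall c : L, a `&` b <= c) (neg a).

Definition is_box (d : Order.disp_t) (L : tbLatticeType d) (neg box : L -> L) :=
  forall a : L, is_max (fun b => a `|` neg b = \top) (box a).

Definition is_dia (d : Order.disp_t) (L : tbLatticeType d) (neg dia : L -> L) :=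
  forall a : L, is_min (fun b => neg a `|` b = \top) (dia a).

(* Main.v *)
Require Import Defs.
From HB Require Import structures.
From mathcomp Require Import all_boot all_order.
Import Order.TTheory.
Local Open Scope order_scope.

Theorem proposition24 (d : Order.disp_t) (A : tbDistrLatticeType d)
  (neg box dia : A -> A)
  (Hneg : is_meet_compl neg) (Hbox : is_box neg box) (Hdia : is_dia neg dia)
  (H4 : forall a : A, box a <= box (box a)) :
  forall a b : A,
    [/\ box (a `&` dia b) = box a `&` dia b,
        dia (a `|` box b) = dia a `|` box b,
        box (a `|` box b) = box a `|` box b &
        dia (a `&` dia b) = dia a `&` dia b].
Proof.
have negP : forall a b : A, (b <= neg a) = (a `&` b == \bot).
  move=> a b; have [H1 H2] := Hneg a; apply/idP/idP.
    move=> hb; rewrite eq_le le0x andbT; apply: le_trans (H1 \bot).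
    by apply: leI2.
  by move/eqP=> e; apply: H2 => c; rewrite e le0x.
have negA : forall a, neg a = neg a by [].
have antineg : forall a b : A, a <= b -> neg b <= neg a.
  move=> a b ab; rewrite negP; have := lexx (neg b); rewrite negP => /eqP e.
  by rewrite eq_le le0x andbT -e leI2.
have boxP : forall a x : A, (x <= box a) <-> (a `|` neg x = \top).
  move=> a x; have [H1 H2] := Hbox a; split; last exact: H2.
  move=> xa; apply/eqP; rewrite eq_le lex1 /=; rewrite -H1.
  by rewrite leU2 ?lexx ?antineg.
have diaP : forall a x : A, (dia a <= x) <-> (neg a `|` x = \top).
  move=> a x; have [H1 H2] := Hdia a; split; last exact: H2.
  move=> xa; apply/eqP; rewrite eq_le lex1 /=; rewrite -H1.
  by rewrite leU2 ?lexx.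
have adj : forall a x, (dia a <= x) <-> (a <= box x).
  move=> a x; split=> h.
    by apply/boxP; rewrite joinC; apply/diaP.
  by apply/diaP; rewrite joinC; apply/boxP.
have adjL : forall a x, dia a <= x -> a <= box x by move=> a x /adj.
have adjR : forall a x, a <= box x -> dia a <= x by move=> a x /adj.
have boxM : forall a b, a <= b -> box a <= box b.
  by move=> a b ab; apply: (adjL); apply: le_trans ab; apply: (adjR).
have diaM : forall a b, a <= b -> dia a <= dia b.
  by move=> a b ab; apply: (adjR); apply: le_trans ab _; apply: (adjL).
have boxI : forall a b, box (a `&` b) = box a `&` box b.
  move=> a b; apply/eqP; rewrite eq_le lexI !boxM ?leIl ?leIr //=.
  by apply: (adjL); rewrite lexI; apply/andP; split; apply: (adjR);
     [apply: leIl | apply: leIr].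
have diaU : forall a b, dia (a `|` b) = dia a `|` dia b.
  move=> a b; apply/eqP; rewrite eq_le leUx !diaM ?leUl ?leUr // andbT.
  rewrite andbT.
  by apply: (adjR); rewrite leUx; apply/andP; split; apply: (adjL);
     [apply: leUl | apply: leUr].
have negI : forall a : A, a `&` neg a = \bot.
  by move=> a; apply/eqP; rewrite -negP.
have boxle : forall a, box a <= a.
  move=> a; have /boxP e := lexx (box a).
  by rewrite -[X in X <= _](meetx1 (box a)) -e meetUr negI joinx0 leIr.
have lediaa : forall a, a <= dia a.
  move=> a; have /diaP e := lexx (dia a).
  by rewrite -[X in X <= _](meetx1 a) -e meetUr negI join0x leIr.
have boxbox : forall a, box (box a) = box a.
  by move=> a; apply/eqP; rewrite eq_le boxle H4.
have diadia : forall a, dia (dia a) = dia a.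
  move=> a; apply/eqP; rewrite eq_le lediaa andbT.
  by apply: (adjR); apply: (adjR); rewrite boxbox; apply: (adjL).
have comp_box : forall c, c `|` neg c = \top -> box c = c.
  by move=> c e; apply/eqP; rewrite eq_le boxle /=; apply/boxP.
have comp_dia : forall c, c `|` neg c = \top -> dia c = c.
  move=> c e; apply/eqP; rewrite eq_le lediaa andbT; apply: (adjR).
  by rewrite comp_box.
have comp_neg : forall c, c `|` neg c = \top -> neg c `|` neg (neg c) = \top.
  move=> c e; apply/eqP; rewrite eq_le lex1 /= -e joinC leU2 //.
  by rewrite negP meetC negI.
have cbox : forall b, box b `|` neg (box b) = \top.
  by move=> b; apply/boxP; rewrite boxbox.
have cdia : forall b, dia b `|` neg (dia b) = \top.
  by move=> b; rewrite joinC; have /diaP := lexx (dia (dia b)); rewrite diadia.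
move=> a b; split.
- by rewrite boxI (comp_box _ (cdia b)).
- by rewrite diaU (comp_dia _ (cbox b)).
- have ec := cbox b.
  apply/eqP; rewrite eq_le; apply/andP; split; last first.
    rewrite leUx boxM ?leUl //=.
    by rewrite -{1}(boxbox b) boxM // leUr.
  set z := box (a `|` box b).
  rewrite -[X in X <= _](meetx1 z) -ec meetUr joinC.
  apply: leU2; last exact: leIr.
  have hn : neg (box b) <= box (neg (box b)) by rewrite (comp_box _ (comp_neg _ ec)).
  apply: (le_trans (leI2 (lexx z) hn)); rewrite /z -boxI boxM //.
  by rewrite meetUl negI joinx0 leIl.
- have ec := cdia b.
  apply/eqP; rewrite eq_le; apply/andP; split.
    rewrite lexI diaM ?leIl //=.
    by rewrite -{2}(diadia b) diaM // leIr.
  have ha : a = (a `&` dia b) `|` (a `&` neg (dia b)).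
    by rewrite -meetUr ec meetx1.
  rewrite {1}ha diaU meetUl leUx; apply/andP; split; first exact: leIl.
  have hn : dia (neg (dia b)) <= neg (dia b).
    by rewrite (comp_dia _ (comp_neg _ ec)).
  have h : dia (a `&` neg (dia b)) <= neg (dia b).
    by apply: le_trans hn; apply: diaM; exact: leIr.
  apply: le_trans (leI2 h (lexx (dia b))) _.
  by rewrite meetC negI le0x.
Qed.
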